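(* Let $A_1,A_2\in\mathbb{R}^{m\times n}$ and let $A_1=U_1-V$ and $A_2=U_2-V$ be two proper weak regular splittings of different types (one of type I and the other of type II). Suppose that $\rho(U_1^{\dagger}V)>0$ and $\rho(U_2^{\dagger}V)>0$. If $V\neq 0$ and $A_2^{\dagger}>A_1^{\dagger}\geq 0$, then $\rho(U_1^{\dagger}V)<\rho(U_2^{\dagger}V)<1$.
   Context: $A^{\dagger}$ denotes the Moore–Penrose inverse and $\rho(\cdot)$ the spectral radius. Inequalities between matrices are entrywise; $X>Y$ means every entry of $X-Y$ is positive. A splitting $A=U-V$ is proper if $R(U)=R(A)$ and $N(U)=N(A)$. A proper splitting is a proper weak regular splitting of type I if $U^{\dagger}\geq 0$ and $U^{\dagger}V\geq 0$, and of type II if $U^{\dagger}\geq 0$ and $VU^{\dagger}\geq 0$. *)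

(* Defs.v *)
From HB Require Import structures.
From mathcomp Require Import all_boot all_order all_algebra.
From mathcomp Require Import complex.
Set Implicit Arguments. Unset Strict Implicit. Unset Printing Implicit Defensive.
Import Order.TTheory GRing.Theory Num.Theory.
Local Open Scope ring_scope.

Definition mx_nonneg (R : numDomainType) m n (M : 'M[R]_(m, n)) : Prop :=
  forall i j, 0 <= M i j.
Definition mx_gt (R : numDomainType) m n (X Y : 'M[R]_(m, n)) : Prop :=
  forall i j, Y i j < X i j.

Definition is_MP_inverse (R : numDomainType) m n (A : 'M[R]_(m, n))
    (X : 'M[R]_(n, m)) : Prop :=
  [/\ A *m X *m A = A, X *m A *m X = X,
      (A *m X)^T = A *m X & (X *m A)^T = X *m A].

Definition in_range (R : pzRingType) m n (A : 'M[R]_(m, n)) (y : 'cV[R]_m) : Prop :=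
  exists x : 'cV[R]_n, y = A *m x.
Definition in_null (R : pzRingType) m n (A : 'M[R]_(m, n)) (x : 'cV[R]_n) : Prop :=
  A *m x = 0.

Definition proper_splitting (R : pzRingType) m n (A U V : 'M[R]_(m, n)) : Prop :=
  [/\ A = U - V,
      (forall y, in_range U y <-> in_range A y) &
      (forall x, in_null U x <-> in_null A x)].

Definition pwr_splitting_I (R : numDomainType) m n (A U V : 'M[R]_(m, n))
    (Ud : 'M[R]_(n, m)) : Prop :=
  [/\ proper_splitting A U V, is_MP_inverse U Ud,
      mx_nonneg Ud & mx_nonneg (Ud *m V)].
Definition pwr_splitting_II (R : numDomainType) m n (A U V : 'M[R]_(m, n))
    (Ud : 'M[R]_(n, m)) : Prop :=
  [/\ proper_splitting A U V, is_MP_inverse U Ud,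
      mx_nonneg Ud & mx_nonneg (V *m Ud)].

(* Spectral radius of a real square matrix: the largest modulus of the
   complex roots of its characteristic polynomial (0 for the empty matrix). *)
Definition mx_eigenvalues (R : rcfType) n (M : 'M[R]_n) : seq R[i] :=
  projT1 (closed_field_poly_normal
            (char_poly (map_mx (real_complex R) M))).
Definition spectral_radius (R : rcfType) n (M : 'M[R]_n) : R :=
  complex.Re (\big[Num.max/0]_(z <- mx_eigenvalues M) `|z|).

(* Main.v *)
Require Import Defs.
From HB Require Import structures.
From mathcomp Require Import all_boot all_order all_algebra.
From mathcomp Require Import complex polyrcf ring lra zify.
From Stdlib Require Import Lia.
Import Order.TTheory GRing.Theory Num.Theory.
Local Open Scope ring_scope.
Set Implicit Arguments. Unset Strict Implicit. Unset Printing Implicit Defensive.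
Section Split.
Variable R : rcfType.

Lemma mul_delta_col m p (M : 'M[R]_(m, p)) i j :
  (M *m delta_mx j (@ord0 0)) i ord0 = M i j.
Proof.
rewrite mxE (bigD1 j) //= mxE !eqxx mulr1 big1 ?addr0 // => k /negbTE nk.
by rewrite mxE nk mulr0.
Qed.

Lemma null_sub m n p (M N : 'M[R]_(m, n)) (X : 'M[R]_(n, p)) :
  (forall x : 'cV_n, M *m x = 0 -> N *m x = 0) -> M *m X = 0 -> N *m X = 0.
Proof.
move=> H MX; apply/matrixP => i j.
have := H (X *m delta_mx j (@ord0 0)); rewrite !mulmxA MX mul0mx => /(_ erefl).
by move/matrixP => /(_ i ord0); rewrite mul_delta_col !mxE.
Qed.

Lemma range_sub m n k (U A : 'M[R]_(m, n)) (Ad : 'M[R]_(n, m)) (X : 'M[R]_(n, k)) :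
  (forall y, in_range U y -> in_range A y) -> A *m Ad *m A = A ->
  A *m Ad *m (U *m X) = U *m X.
Proof.
move=> H AA; apply/matrixP => i j.
have [x hx] := H ((U *m X) *m delta_mx j (@ord0 0)) (ex_intro _ (X *m delta_mx j (@ord0 0)) (esym (mulmxA _ _ _))).
have hx' : U *m X *m delta_mx j (@ord0 0) = A *m x := hx.
have e : (A *m Ad *m (U *m X)) *m delta_mx j (@ord0 0) = (U *m X) *m delta_mx j (@ord0 0).
  by rewrite -[LHS]mulmxA hx' mulmxA AA.
by move/matrixP: e => /(_ i ord0); rewrite !mul_delta_col.
Qed.

Lemma VUdU m n (A U V : 'M[R]_(m, n)) Ud :
  proper_splitting A U V -> is_MP_inverse U Ud -> V *m Ud *m U = V.
Proof.
case=> eA _ hN [h1 _ _ _].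
have: V *m (1%:M - Ud *m U) = 0.
  apply: (null_sub (M := U)).
    move=> x Ux; have := (proj1 (hN x)) Ux; rewrite /in_null eA => Ax.
    by move: Ax; rewrite mulmxBl Ux sub0r => /eqP; rewrite oppr_eq0 => /eqP.
  by rewrite mulmxBr mulmx1 mulmxA h1 subrr.
by rewrite mulmxBr mulmx1 mulmxA => /eqP; rewrite subr_eq0 => /eqP <-.
Qed.

Lemma UAdA m n (A U V : 'M[R]_(m, n)) Ad :
  proper_splitting A U V -> is_MP_inverse A Ad -> U *m Ad *m A = U.
Proof.
case=> eA _ hN [h1 _ _ _].
have: U *m (1%:M - Ad *m A) = 0.
  apply: (null_sub (M := A)).
    by move=> x Ax; apply/(proj2 (hN x)).
  by rewrite mulmxBr mulmx1 mulmxA h1 subrr.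
by rewrite mulmxBr mulmx1 mulmxA => /eqP; rewrite subr_eq0 => /eqP <-.
Qed.

Lemma AAdU m n (A U V : 'M[R]_(m, n)) Ad :
  proper_splitting A U V -> is_MP_inverse A Ad -> A *m Ad *m U = U.
Proof.
case=> eA hR _ [h1 _ _ _].
have := @range_sub _ _ _ U A Ad 1%:M (fun y => proj1 (hR y)) h1.
by rewrite mulmx1.
Qed.

Lemma UUdV m n (A U V : 'M[R]_(m, n)) Ud :
  proper_splitting A U V -> is_MP_inverse U Ud -> U *m Ud *m V = V.
Proof.
case=> eA hR _ [h1 _ _ _].
have := @range_sub _ _ _ A U Ud 1%:M (fun y => proj2 (hR y)) h1.
rewrite mulmx1 => hA.
have -> : V = U - A by rewrite eA opprB addrC subrK.
by rewrite mulmxBr h1 hA.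
Qed.

Lemma UdAAd m n (A U V : 'M[R]_(m, n)) Ud Ad :
  proper_splitting A U V -> is_MP_inverse U Ud -> is_MP_inverse A Ad ->
  Ud *m A *m Ad = Ud.
Proof.
move=> ps hU hA; have h := AAdU ps hA.
case: hU => u1 u2 u3 u4; case: hA => a1 a2 a3 a4.
have e1 : Ud = Ud *m Ud^T *m U^T by rewrite -mulmxA -trmx_mul u3 mulmxA u2.
have e2 : U^T *m (A *m Ad) = U^T by rewrite -{1}a3 -trmx_mul h.
by rewrite {1}e1 -!mulmxA e2 !mulmxA -e1.
Qed.

Lemma AdAUd m n (A U V : 'M[R]_(m, n)) Ud Ad :
  proper_splitting A U V -> is_MP_inverse U Ud -> is_MP_inverse A Ad ->
  Ad *m A *m Ud = Ud.
Proof.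
move=> ps hU hA; have h := UAdA ps hA.
case: hU => u1 u2 u3 u4; case: hA => a1 a2 a3 a4.
have e1 : Ud = U^T *m Ud^T *m Ud by rewrite -trmx_mul u4 u2.
have e2 : (Ad *m A) *m U^T = U^T by rewrite -{1}a4 -trmx_mul mulmxA h.
by rewrite {1}e1 !mulmxA e2 -e1.
Qed.

Definition rv_nonneg k (u : 'M[R]_(1, k)) := forall j, 0 <= u 0 j.
Definition cv_nonneg k (u : 'cV[R]_k) := forall j, 0 <= u j 0.

Lemma nonneg_mul m n p (X : 'M[R]_(m, n)) (Y : 'M[R]_(n, p)) :
  mx_nonneg X -> mx_nonneg Y -> mx_nonneg (X *m Y).
Proof.
move=> hX hY i j; rewrite mxE; apply: sumr_ge0 => k _; exact: mulr_ge0.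
Qed.

Lemma nonzero_entry m n (X : 'M[R]_(m, n)) : X != 0 -> exists i j, X i j != 0.
Proof.
move=> h; case: (pickP (fun ij : 'I_m * 'I_n => X ij.1 ij.2 != 0)) => [[i j] /= h'|H].
  by exists i, j.
case/negP: h; apply/eqP/matrixP => i j; move/(_ (i, j)): H => /= /negbFE/eqP ->.
by rewrite mxE.
Qed.

End Split.
Section Spec.
Variable R : rcfType.
Local Notation C := (R[i]).
Local Open Scope complex_scope.

Lemma max_realC (s : seq C) :
  \big[Num.max/0]_(z <- s) `|z| = (\big[Num.max/0]_(z <- s) complex.Re `|z|)%:C.
Proof.
elim: s => [|a s IH]; first by rewrite !big_nil.
rewrite !big_cons IH.
have ha : `|a| = (complex.Re `|a|)%:C by rewrite RRe_real // normr_real.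
rewrite {1}ha !maxElt ltcR; by case: ifP.
Qed.

Lemma rhoE k (B : 'M[R]_k) :
  spectral_radius B = \big[Num.max/0]_(z <- mx_eigenvalues B) complex.Re `|z|.
Proof. by rewrite /spectral_radius max_realC. Qed.

Lemma mem_eig k (B : 'M[R]_k) z :
  (z \in mx_eigenvalues B) = root (char_poly (map_mx (real_complex R) B)) z.
Proof.
rewrite /mx_eigenvalues; case: closed_field_poly_normal => s /= hs.
rewrite [in RHS]hs.
have /monicP -> := char_poly_monic (map_mx (real_complex R) B).
by rewrite scale1r root_prod_XsubC.
Qed.

Lemma bigmax_ub (s : seq C) z : z \in s ->
  complex.Re `|z| <= \big[Num.max/0]_(x <- s) complex.Re `|x|.
Proof.
elim: s => [|a s IH] //; rewrite in_cons big_cons le_max => /orP[/eqP ->|/IH ->].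
  by rewrite lexx.
by rewrite orbT.
Qed.

Lemma bigmax_ge0 (s : seq C) : 0 <= \big[Num.max/0]_(x <- s) complex.Re `|x|.
Proof. by elim: s => [|a s IH]; rewrite ?big_nil // big_cons le_max IH orbT. Qed.

Lemma bigmax_lub (s : seq C) c : 0 <= c -> (forall z, z \in s -> complex.Re `|z| <= c) ->
  \big[Num.max/0]_(x <- s) complex.Re `|x| <= c.
Proof.
move=> c0; elim: s => [|a s IH] h; rewrite ?big_nil // big_cons ge_max h ?mem_head //=.
by apply: IH => z zs; apply: h; rewrite in_cons zs orbT.
Qed.

Lemma bigmax_attained (s : seq C) : 0 < \big[Num.max/0]_(x <- s) complex.Re `|x| ->
  exists2 z, z \in s & complex.Re `|z| = \big[Num.max/0]_(x <- s) complex.Re `|x|.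
Proof.
elim: s => [|a s IH]; first by rewrite big_nil ltxx.
rewrite big_cons maxElt; case: ifP => h.
  move=> /IH [z zs ez]; by exists z; rewrite ?in_cons ?zs ?orbT.
by move=> _; exists a; rewrite ?mem_head.
Qed.

Lemma rho_ge0 k (B : 'M[R]_k) : 0 <= spectral_radius B.
Proof. by rewrite rhoE bigmax_ge0. Qed.

Lemma root_le_rho k (B : 'M[R]_k) z :
  root (char_poly (map_mx (real_complex R) B)) z -> complex.Re `|z| <= spectral_radius B.
Proof. by rewrite -mem_eig rhoE => /bigmax_ub. Qed.

Lemma rho_attained k (B : 'M[R]_k) : 0 < spectral_radius B ->
  exists2 z, root (char_poly (map_mx (real_complex R) B)) z &
             complex.Re `|z| = spectral_radius B.
Proof.
rewrite rhoE => /bigmax_attained [z zs ez]; exists z => //.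
by rewrite -mem_eig.
Qed.

Lemma char_poly_tr k (B : 'M[R[i]]_k) : char_poly B^T = char_poly B.
Proof.
rewrite /char_poly -det_tr; congr (\det _).
apply/matrixP => i j; rewrite !mxE; case: (eqVneq i j) => [->|ne] //.
Qed.

Lemma rho_tr k (B : 'M[R]_k) : spectral_radius B^T = spectral_radius B.
Proof.
rewrite /spectral_radius /mx_eigenvalues.
have -> : map_mx (real_complex R) B^T = (map_mx (real_complex R) B)^T.
  by apply/matrixP => i j; rewrite !mxE.
by rewrite char_poly_tr.
Qed.

Lemma eig_AB m n (X : 'M[R]_(m, n)) (Y : 'M[R]_(n, m)) z : z != 0 ->
  root (char_poly (map_mx (real_complex R) (X *m Y))) z ->
  root (char_poly (map_mx (real_complex R) (Y *m X))) z.
Proof.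
move=> znz; rewrite -!eigenvalue_root_char !map_mxM => /eigenvalueP [v hv vnz].
apply/eigenvalueP; exists (v *m map_mx (real_complex R) X).
  by rewrite mulmxA -(mulmxA v) hv -scalemxAl.
apply/eqP => h0; move: hv; rewrite mulmxA h0 mul0mx => /esym/eqP.
by rewrite scaler_eq0 (negbTE znz) (negbTE vnz).
Qed.

Lemma rho_AB_le m n (X : 'M[R]_(m, n)) (Y : 'M[R]_(n, m)) :
  spectral_radius (X *m Y) <= spectral_radius (Y *m X).
Proof.
rewrite [X in X <= _]rhoE; apply: bigmax_lub; first exact: rho_ge0.
move=> z; rewrite mem_eig; case: (eqVneq z 0) => [->|znz].
  by rewrite normr0 => _; exact: rho_ge0.
by move/(eig_AB znz) => /root_le_rho.
Qed.

Lemma rho_AB m n (X : 'M[R]_(m, n)) (Y : 'M[R]_(n, m)) :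
  spectral_radius (X *m Y) = spectral_radius (Y *m X).
Proof. by apply/le_anti; rewrite !rho_AB_le. Qed.

End Spec.
Lemma SL (R : rcfType) k l (X Cm : 'M[R]_(k, l)) (Q : 'M[R]_k) :
  mx_nonneg Cm -> mx_nonneg Q -> (forall i, \sum_j Q i j < 1) ->
  X = Cm + Q *m X -> mx_nonneg X.
Proof.
move=> nC nQ hQ eX i j; rewrite leNgt; apply/negP => neg.
have [i1 _ hmin] := @arg_minP _ _ _ i xpredT (fun i1 => X i1 j) isT.
have m0 : X i1 j < 0 by apply: le_lt_trans (hmin i isT) neg.
have e := congr1 (fun M : 'M[R]_(k, l) => M i1 j) eX.
rewrite /= mxE [(_ *m _) _ _]mxE in e.
have h1 : (\sum_l0 Q i1 l0) * X i1 j <= \sum_l0 Q i1 l0 * X l0 j.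
  rewrite mulr_suml; apply: ler_sum => l0 _; apply: ler_wpM2l => //.
  exact: hmin.
have h2 : X i1 j < (\sum_l0 Q i1 l0) * X i1 j.
  have : 0 < (\sum_l0 Q i1 l0 - 1) * X i1 j by rewrite nmulr_lgt0 // subr_lt0.
  by rewrite mulrBl mul1r subr_gt0.
have : X i1 j < X i1 j.
  apply: (lt_le_trans h2); rewrite {2}e; apply: (le_trans h1).
  by rewrite lerDr.
by rewrite ltxx.
Qed.

Section PFsec.
Variable R : rcfType.
Variable k : nat.
Variable B : 'M[R]_k.
Hypothesis nB : mx_nonneg B.

Local Notation chi := (char_poly B).
Local Notation P := (\adj (char_poly_mx B)).
Local Notation r := (spectral_radius B).

Definition ev (t : R) m n (M : 'M[{poly R}]_(m, n)) := map_mx (horner_eval t) M.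

Lemma ev_entry t m n (M : 'M[{poly R}]_(m, n)) i j : ev t M i j = (M i j).[t].
Proof. by rewrite mxE horner_evalE. Qed.

Lemma ev_mul t m n p (M : 'M[{poly R}]_(m, n)) (N : 'M[{poly R}]_(n, p)) :
  ev t (M *m N) = ev t M *m ev t N.
Proof. exact: map_mxM. Qed.

Lemma ev_scalar t m (c : {poly R}) : ev t (c%:M : 'M_m) = c.[t]%:M.
Proof. by rewrite /ev map_scalar_mx. Qed.

Lemma ev_cpm t : ev t (char_poly_mx B) = t%:M - B.
Proof.
apply/matrixP => i j; rewrite !mxE /horner_eval.
by rewrite hornerD hornerN hornerMn hornerX hornerC.
Qed.

Lemma adjL t : (t%:M - B) *m ev t P = chi.[t]%:M.
Proof. by rewrite -ev_cpm -ev_mul mul_mx_adj ev_scalar. Qed.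

Lemma adjR t : ev t P *m (t%:M - B) = chi.[t]%:M.
Proof. by rewrite -ev_cpm -ev_mul mul_adj_mx ev_scalar. Qed.

Lemma normC_real (y : R) : complex.Re `|(y%:C)%C| = `|y|.
Proof. by rewrite normc_def /= expr0n /= addr0 sqrtr_sqr. Qed.

Lemma noroot_gt y : r < y -> ~~ root chi y.
Proof.
move=> ry; apply/negP => hy.
have := rmorph_root (real_complex R) hy; rewrite map_char_poly => /root_le_rho.
rewrite normC_real => h.
have : y <= r by apply: le_trans (ler_norm y) h.
by rewrite leNgt ry.
Qed.

Lemma chi_pos t : r < t -> 0 < chi.[t].
Proof.
move=> rt.
have h := @sgp_pinftyP _ t chi _ t.
have : Num.sg chi.[t] = 1.
  rewrite h.
  - by rewrite /sgp_pinfty (monicP (char_poly_monic B)) sgr1.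
  - by move=> y; rewrite in_itv /= andbT => ty; apply: noroot_gt; apply: lt_le_trans ty.
  - by rewrite in_itv /= lexx.
by move/eqP; rewrite sgr_cp0.
Qed.

Definition Rt t := (chi.[t])^-1 *: ev t P.

Lemma RtL t : r < t -> (t%:M - B) *m Rt t = 1%:M.
Proof.
move=> rt; rewrite /Rt -scalemxAr adjL scale_scalar_mx mulVf //.
by rewrite gt_eqF // chi_pos.
Qed.

Lemma RtR t : r < t -> Rt t *m (t%:M - B) = 1%:M.
Proof.
move=> rt; rewrite /Rt -scalemxAl adjR scale_scalar_mx mulVf //.
by rewrite gt_eqF // chi_pos.
Qed.

Lemma Rt_entry t i j : Rt t i j = chi.[t]^-1 * (P i j).[t].
Proof. by rewrite /Rt /ev !mxE /horner_eval. Qed.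

Definition G t := forall i j, 0 <= (P i j).[t].

Lemma G_Rt t : r < t -> G t <-> mx_nonneg (Rt t).
Proof.
move=> rt; have cp : 0 < chi.[t]^-1 by rewrite invr_gt0 chi_pos.
split => h i j; move: (h i j); rewrite Rt_entry.
  by move=> hh; rewrite pmulr_rge0.
by rewrite pmulr_rge0.
Qed.


Lemma large : exists2 T, r < T & forall t, T <= t -> G t.
Proof.
pose s := \sum_i \sum_j B i j.
have s0 : 0 <= s by apply: sumr_ge0 => i _; apply: sumr_ge0.
have r0 := rho_ge0 B.
exists (r + s + 1); first by lra.
move=> t Tt; have rt : r < t by lra.
have st : s < t by lra.
have t0 : 0 < t by lra.
apply/(G_Rt rt); apply: (@SL _ _ _ _ (t^-1%:M) (t^-1 *: B)).
- by move=> i j; rewrite mxE mulrn_wge0 // invr_ge0 ltW.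
- by move=> i j; rewrite mxE mulr_ge0 // invr_ge0 ltW.
- move=> i; under eq_bigr do rewrite mxE.
  rewrite -mulr_sumr ltr_pdivrMl // mulr1; apply: le_lt_trans st.
  rewrite /s [X in _ <= X](bigD1 i) //= lerDl; apply: sumr_ge0 => l _; exact: sumr_ge0.
- have h := RtL rt; rewrite mulmxBl mul_scalar_mx in h.
  have h' : t *: Rt t = 1%:M + B *m Rt t by rewrite -h subrK.
  rewrite -scalemxAl -scalemx1 -scalerDr -h' scalerA mulVf ?scale1r //.
  by rewrite gt_eqF.
Qed.

Lemma step s : r < s -> G s ->
  exists2 d, 0 < d & forall t, r < t -> s - d <= t -> t <= s -> G t.
Proof.
move=> rs Gs; have nRs := (G_Rt rs).1 Gs.
pose S := \sum_i \sum_j Rt s i j.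
have S0 : 0 <= S by apply: sumr_ge0 => i _; apply: sumr_ge0.
exists (S + 1)^-1; first by rewrite invr_gt0; lra.
move=> t rt st ts; apply/(G_Rt rt).
have e1 : t%:M - B = (s%:M - B) - (s - t)%:M.
  apply/matrixP => i j; rewrite !mxE mulrnBl.
  by case: (i == j); rewrite /= ?mulr1n ?mulr0n; ring.
have e2 : Rt s *m (t%:M - B) = 1%:M - (s - t) *: Rt s.
  by rewrite e1 mulmxBr RtR // mul_mx_scalar.
have e3 : Rt s = Rt t - ((s - t) *: Rt s) *m Rt t.
  by rewrite -{1}[Rt s]mulmx1 -(RtL rt) mulmxA e2 mulmxBl mul1mx.
apply: (@SL _ _ _ _ (Rt s) ((s - t) *: Rt s)) => //.
- by move=> i j; rewrite mxE mulr_ge0 // subr_ge0.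
- move=> i; under eq_bigr do rewrite mxE.
  rewrite -mulr_sumr.
  have hi : \sum_j Rt s i j <= S.
    by rewrite /S [X in _ <= X](bigD1 i) //= lerDl; apply: sumr_ge0 => l _; exact: sumr_ge0.
  have hd : s - t <= (S + 1)^-1 by lra.
  apply: (le_lt_trans (y := (S + 1)^-1 * S)).
    apply: ler_pM => //; first by rewrite subr_ge0.
    by apply: sumr_ge0.
  by rewrite mulrC ltr_pdivrMr; lra.
- by rewrite {1}e3 subrK.
Qed.

Lemma contG (p : {poly R}) x : (forall t, x < t -> 0 <= p.[t]) -> 0 <= p.[x].
Proof.
move=> h; rewrite leNgt; apply/negP => neg.
have np : 0 < - p.[x] by rewrite oppr_gt0.
have [d d0 hd] := @poly_cont _ x p (- p.[x]) np.
have := hd (x + d / 2%:R).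
have e : `|x + d / 2%:R - x| < d.
  rewrite addrAC subrr add0r ger0_norm; last by rewrite divr_ge0 // ltW.
  by rewrite ltr_pdivrMr //; lra.
move/(_ e) => h2.
have xd : x < x + d / 2%:R by rewrite ltrDl divr_gt0.
have h3 := h (x + d / 2%:R) xd.
have := le_lt_trans (ler_norm _) h2; lra.
Qed.

Definition piP := \prod_(ij : 'I_k * 'I_k | P ij.1 ij.2 != 0) P ij.1 ij.2.

Lemma piP_neq0 : piP != 0.
Proof. by rewrite prodf_seq_neq0; apply/allP => ij _; apply/implyP. Qed.

Lemma root_piP i j x : P i j != 0 -> root (P i j) x -> root piP x.
Proof.
move=> nz; rewrite /root /piP horner_prod (bigD1 (i, j)) //= => /eqP ->.
by rewrite mul0r.
Qed.

Local Notation L := (rootsR piP).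

Lemma root_in_L x : root piP x -> x \in L.
Proof. by move=> h; have := roots_on_rootsR piP_neq0 x; rewrite in_itv /= h. Qed.


Lemma onestep a b : r < a -> a <= b -> (forall t, b <= t -> G t) ->
  (forall t, a <= t -> G t) \/
  exists y, [/\ a < y, y < b, y \in L & forall t, y <= t -> G t].
Proof.
move=> ra ab Gb.
have rb : r < b by apply: lt_le_trans ab.
have [d d0 hd] := step rb (Gb b (lexx b)).
have Gbd : forall t, r < t -> b - d <= t -> G t.
  move=> t rt bt; case: (lerP b t) => [/Gb //|tb].
  by apply: hd => //; apply: ltW.
case: (lerP (b - d) a) => hba.
  left => t at_; apply: Gbd; last by apply: le_trans at_.
  by apply: lt_le_trans at_.
pose b' := b - d / 2%:R.
have ab' : a < b' by rewrite /b'; lra.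
have bb' : b - d < b' by rewrite /b'; lra.
have b'b : b' < b by rewrite /b'; lra.
have fillG : forall s0, a <= s0 -> s0 < b' ->
    {in `]s0, b'[, forall z, ~~ root piP z} -> forall t, s0 <= t -> G t.
  move=> s0 as0 s0b' nor t s0t.
  have rt : r < t by apply: lt_le_trans s0t; apply: lt_le_trans as0.
  case: (lerP (b - d) t) => [/(Gbd _ rt) //|tbd].
  move=> i j; have [->|pnz] := eqVneq (P i j) 0; first by rewrite horner0.
  rewrite leNgt; apply/negP => neg.
  have rbd : r < b - d by apply: lt_trans hba.
  have Gt' := Gbd (b - d) rbd (lexx _) i j.
  have tin : b - d \in `]s0, b'[ by rewrite in_itv /= bb' andbT; apply: le_lt_trans tbd.
  case: (eqVneq (P i j).[b - d] 0) => h0.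
    by have := nor _ tin; rewrite (root_piP (x := b - d) pnz) // /root h0.
  have pos : 0 < (P i j).[b - d] by rewrite lt_def h0 Gt'.
  have neg2 : (P i j).[t] * (P i j).[b - d] < 0 by rewrite pmulr_llt0.
  have [z zin rz] := @poly_ivtoo _ (P i j) t (b - d) (ltW tbd) neg2.
  have zin' : z \in `]s0, b'[.
    move: zin; rewrite !in_itv /= => /andP[tz zb]; apply/andP; split.
      by apply: le_lt_trans tz.
    by apply: lt_trans bb'.
  by have := nor _ zin'; rewrite (root_piP pnz rz).
case: (prev_rootP piP a b') => [p0|y pnz py hy nor|c pnz hc nor].
- by move: piP_neq0; rewrite p0 eqxx.
- right; exists y; move: hy; rewrite in_itv /= => /andP[ay yb']; split => //.
  + by apply: lt_trans b'b.
  + by apply: root_in_L; rewrite /root py.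
  + by apply: fillG => //; apply: ltW.
- have ca : c = a by rewrite hc; apply/min_idPl; apply: ltW.
  by subst c; left; apply: fillG => //; rewrite lexx.
Qed.

Lemma allG_aux n : forall a b, r < a -> a <= b -> (forall t, b <= t -> G t) ->
  (count (fun x => (a < x)%R && (x < b)%R) L <= n)%N -> forall t, a <= t -> G t.
Proof.
elim: n => [|n IH] a b ra ab Gb hc; case: (onestep ra ab Gb) => [//|[y [ay yb yL Gy]]].
- have : (0 < count (fun x => (a < x)%R && (x < b)%R) L)%N.
    by rewrite -has_count; apply/hasP; exists y => //; rewrite ay yb.
  by rewrite lt0n; move: hc; rewrite leqn0 => ->.
- apply: (IH a y ra (ltW ay) Gy).
  have e : count (fun x => (a < x)%R && (x < b)%R) L =
           (count (fun x => (a < x)%R && (x < y)%R) L + count (fun x => (y <= x)%R && (x < b)%R) L)%N.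
    rewrite -count_predUI.
    have -> : count (predI (fun x => (a < x)%R && (x < y)%R) (fun x => (y <= x)%R && (x < b)%R)) L = 0%N.
      apply/eqP; rewrite -leqn0 leqNgt -has_count; apply/hasP => [[x _ /=]].
      by case/andP => /andP[_ xy] /andP[yx _]; move: (lt_le_trans xy yx); rewrite ltxx.
    rewrite addn0; apply: eq_count => x /=.
    case: (ltP x y) => xy /=; rewrite ?andbT ?andbF.
    + by rewrite (lt_trans xy yb) andbT orbF.
    + by rewrite (lt_le_trans ay xy).
  have : (0 < count (fun x => (y <= x)%R && (x < b)%R) L)%N.
    by rewrite -has_count; apply/hasP; exists y => //; rewrite lexx yb.
  move: hc; rewrite e; lia.
Qed.

Lemma allG t : r < t -> G t.
Proof.
move=> rt; have [T rT GT] := large.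
apply: (@allG_aux _ t (Num.max t T)) => //; first by rewrite le_max lexx.
by move=> t' h; apply: GT; apply: le_trans h; rewrite le_max lexx orbT.
Qed.

Lemma k_pos : 0 < r -> (0 < k)%N.
Proof.
move=> rp; have [z hz _] := rho_attained rp.
case: (posnP k) => // k0; exfalso.
have : size (char_poly (map_mx (real_complex R) B)) = 1%N by rewrite size_char_poly k0.
move/eqP/size_poly1P => [c cnz ec]; move: hz; rewrite ec /root hornerC.
by rewrite (negbTE cnz).
Qed.

Lemma P_nz : 0 < r -> exists i j, P i j != 0.
Proof.
move=> rp; have i0 : 'I_k := Ordinal (k_pos rp).
case: (pickP (fun ij : 'I_k * 'I_k => P ij.1 ij.2 != 0)) => [[i j] /= h|H].
  by exists i, j.
exfalso.
have rt : r < r + 1 by lra.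
have := adjR (r + 1).
have -> : ev (r + 1) P = 0.
  apply/matrixP => i j; rewrite ev_entry.
  by move/(_ (i, j)): H => /= /negbFE/eqP ->; rewrite horner0 mxE.
rewrite mul0mx => /matrixP /(_ i0 i0); rewrite !mxE eqxx mulr1n => /esym/eqP.
by rewrite (gt_eqF (chi_pos rt)).
Qed.

Lemma scalar_mx_0 m : (0 : R)%:M = 0 :> 'M[R]_m.
Proof. by apply/matrixP => i j; rewrite !mxE mul0rn. Qed.

Lemma no_inv_nonneg (Y : 'M[R]_k) : 0 < r -> mx_nonneg Y ->
  (r%:M - B) *m Y = 1%:M -> False.
Proof.
move=> rp nY hY.
have [z hz ez] := rho_attained rp.
move: hz; rewrite -eigenvalue_root_char => /eigenvalueP [v hv vnz].
set f := real_complex R in hv *.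
pose a : 'rV[R[i]]_k := \row_j `|v 0 j|.
have ez' : `|z| = (r%:C)%C by rewrite -ez RRe_real // normr_real.
have ineq : forall j, (r%:C)%C * `|v 0 j| <= \sum_i `|v 0 i| * ((B i j)%:C)%C.
  move=> j; have := congr1 (fun M : 'rV[R[i]]_k => M 0 j) hv.
  rewrite /= !mxE => e.
  rewrite -ez' -normrM -e.
  apply: (le_trans (ler_norm_sum _ _ _)); apply: ler_sum => i _.
  rewrite normrM mxE [`|f _|]ger0_norm // /f ler0c; exact: nB.
have aM : forall j, (a *m map_mx f (r%:M - B)) 0 j <= 0.
  move=> j.
  have -> : map_mx f (r%:M - B) = (f r)%:M - map_mx f B.
    by rewrite raddfB /= map_scalar_mx.
  rewrite mulmxBr mul_mx_scalar !mxE subr_le0.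
  apply: (le_trans (ineq j)); apply: ler_sum => i _; rewrite !mxE.
  done.
have ea : a = (a *m map_mx f (r%:M - B)) *m map_mx f Y.
  by rewrite -mulmxA -map_mxM hY map_mx1 mulmx1.
have a0 : forall j, a 0 j = 0.
  move=> j; apply/le_anti/andP; split; last by rewrite mxE normr_ge0.
  rewrite ea mxE; apply: sumr_le0 => l _; apply: mulr_le0_ge0 => //.
  by rewrite mxE ler0c.
move/negP: vnz; apply; apply/eqP/matrixP => i j.
rewrite (ord1 i) mxE; move: (a0 j); rewrite mxE => /eqP.
by rewrite normr_eq0 => /eqP.
Qed.

Lemma mul_entries (M X Y : 'M[{poly R}]_k) c :
  (forall i j, X i j = Y i j * c) -> forall i j, (M *m X) i j = (M *m Y) i j * c.
Proof.
move=> h i j; rewrite !mxE mulr_suml; apply: eq_bigr => l _.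
by rewrite h mulrA.
Qed.

Lemma PF_sec : 0 < r ->
  exists w : 'M[R]_(k, 1), [/\ mx_nonneg w, w != 0 & B *m w = r *: w].
Proof.
move=> rp.
have [i1 [j1 nz1]] := P_nz rp.
pose q : {poly R} := ('X - r%:P).
have qnz : q != 0 by rewrite polyXsubC_eq0.
pose Pdv := fun e => [forall i, forall j, q ^+ e %| P i j].
have exP : exists e, Pdv e.
  by exists 0%N; apply/forallP => i; apply/forallP => j; rewrite expr0 dvd1p.
have ubP : forall e, Pdv e -> (e <= size (P i1 j1))%N.
  move=> e /forallP /(_ i1) /forallP /(_ j1) /(dvdp_leq nz1).
  by rewrite size_exp_XsubC => /ltnW.
case: (ex_maxnP exP ubP) => e He Hmax.
have dv : forall i j, q ^+ e %| P i j.
  by move=> i j; move/forallP: He => /(_ i) /forallP /(_ j).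
pose P' : 'M[{poly R}]_k := \matrix_(i, j) (P i j %/ q ^+ e).
have hP : forall i j, P i j = P' i j * q ^+ e.
  by move=> i j; rewrite [P' i j]mxE divpK.
have [i2 [j2 nr2]] : exists i j, ~~ root (P' i j) r.
  have : ~~ Pdv e.+1 by apply/negP => /Hmax; rewrite ltnn.
  move/forallPn => [i /forallPn [j hj]]; exists i, j.
  by apply: contra hj => hr; rewrite hP exprS dvdp_mul ?dvdpp // dvdp_XsubCl.
have qe0 : q ^+ e != 0 by rewrite expf_neq0.
pose cpm := char_poly_mx B.
have hM := mul_entries cpm hP.
have chiM : cpm *m P = chi%:M := mul_mx_adj cpm.
pose chi' := (cpm *m P') i1 i1.
have hchi : chi = chi' * q ^+ e.
  have := congr1 (fun M : 'M[{poly R}]_k => M i1 i1) chiM.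
  by rewrite /= hM [chi%:M _ _]mxE eqxx mulr1n => <-.
have hcP' : cpm *m P' = chi'%:M.
  apply/matrixP => i j; apply: (mulIf qe0).
  rewrite -hM chiM [chi'%:M i j]mxE [chi%:M i j]mxE mulrnAl -hchi //.
have eR : (r%:M - B) *m ev r P' = chi'.[r]%:M.
  by rewrite -ev_cpm -ev_mul hcP' ev_scalar.
have pos_t : forall t, r < t -> (forall i j, 0 <= (P' i j).[t]) /\ 0 < chi'.[t].
  move=> t rt; have qt : 0 < (q ^+ e).[t].
    by rewrite horner_exp hornerXsubC exprn_gt0 // subr_gt0.
  split; last by have := chi_pos rt; rewrite hchi hornerM pmulr_lgt0.
  by move=> i j; have := allG rt i j; rewrite hP hornerM pmulr_lge0.
have nP' : forall i j, 0 <= (P' i j).[r].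
  by move=> i j; apply: contG => t rt; exact: (pos_t t rt).1.
have nchi : 0 <= chi'.[r].
  by apply: contG => t rt; apply: ltW; exact: (pos_t t rt).2.
case: (eqVneq chi'.[r] 0) => hc.
- pose w := ev r P' *m delta_mx j2 (@ord0 0).
  exists w; split.
  + by move=> i j; rewrite (ord1 j) /w mul_delta_col ev_entry.
  + apply/negP => /eqP w0; move: nr2; rewrite /root.
    have := congr1 (fun M : 'M[R]_(k, 1) => M i2 ord0) w0.
    by rewrite /= /w mul_delta_col ev_entry => ->; rewrite mxE eqxx.
  + have : (r%:M - B) *m w = 0 by rewrite /w mulmxA eR hc scalar_mx_0 mul0mx.
    by rewrite mulmxBl mul_scalar_mx => /eqP; rewrite subr_eq0 => /eqP <-.
- exfalso.
  have cpos : 0 < chi'.[r] by rewrite lt_def hc nchi.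
  apply: (@no_inv_nonneg (chi'.[r]^-1 *: ev r P') rp).
  + by move=> i j; rewrite mxE ev_entry mulr_ge0 // invr_ge0 ltW.
  + by rewrite -scalemxAr eR scale_scalar_mx mulVf.
Qed.
End PFsec.

Lemma PF (R : rcfType) k (B : 'M[R]_k) : mx_nonneg B -> 0 < spectral_radius B ->
  exists w : 'M[R]_(k, 1), [/\ mx_nonneg w, w != 0 & B *m w = spectral_radius B *: w].
Proof. exact: PF_sec. Qed.
Section Split2.
Variable R : rcfType.

Lemma L1 m n (A U V : 'M[R]_(m, n)) Ud Ad (u : 'M[R]_(1, n)) rho :
  proper_splitting A U V -> is_MP_inverse U Ud -> is_MP_inverse A Ad ->
  mx_nonneg Ud -> mx_nonneg Ad -> mx_nonneg u -> u != 0 -> 0 < rho ->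
  u *m (Ud *m V) = rho *: u ->
  rho < 1 /\ u *m (Ad *m V) = (rho / (1 - rho)) *: u.
Proof.
move=> ps hU hA nUd nAd nu unz rpos hu.
have hVUU := VUdU ps hU.
have eA : A = U - V by case: ps.
have hu' : u *m Ud *m V = rho *: u by rewrite -mulmxA.
have rnz : rho != 0 by rewrite gt_eqF.
have huU : u *m Ud *m U = u.
  apply: (@scalerI _ _ rho rnz).
  by rewrite !scalemxAl -[in LHS]hu' -!mulmxA (mulmxA V) hVUU.
have huA : u *m Ud *m A = (1 - rho) *: u.
  by rewrite eA mulmxBr huU hu' scalerBl scale1r.
have hUd := UdAAd ps hU hA.
have key : u *m Ud = (1 - rho) *: (u *m Ad).
  by rewrite -{1}hUd !mulmxA huA -scalemxAl.
have r1 : rho < 1.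
  have nz : u *m Ud != 0.
    apply/eqP => h0; move: hu'; rewrite h0 mul0mx => /esym/eqP.
    by rewrite scaler_eq0 (negbTE rnz) (negbTE unz).
  have [i [j hij]] := nonzero_entry nz.
  have pos : 0 < (u *m Ud) i j by rewrite lt_def hij nonneg_mul.
  move: pos; rewrite key mxE => pos.
  have h0 := nonneg_mul nu nAd i j.
  rewrite -subr_gt0; apply: contraTT pos; rewrite -!leNgt => h.
  exact: mulr_le0_ge0.
split => //.
have r1nz : 1 - rho != 0 by rewrite subr_eq0 eq_sym lt_eqF.
have e : (1 - rho) *: (u *m (Ad *m V)) = rho *: u.
  by rewrite mulmxA scalemxAl -key -mulmxA hu.
apply: (@scalerI _ _ (1 - rho) r1nz).
by rewrite e scalerA mulrC divfK.
Qed.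

Lemma L2 m n (A U V : 'M[R]_(m, n)) Ud Ad (w : 'M[R]_(m, 1)) rho :
  proper_splitting A U V -> is_MP_inverse U Ud -> is_MP_inverse A Ad ->
  mx_nonneg Ud -> mx_nonneg Ad -> mx_nonneg w -> w != 0 -> 0 < rho ->
  (V *m Ud) *m w = rho *: w ->
  rho < 1 /\ (V *m Ad) *m w = (rho / (1 - rho)) *: w.
Proof.
move=> ps hU hA nUd nAd nw wnz rpos hw.
have hUUV := UUdV ps hU.
have eA : A = U - V by case: ps.
have rnz : rho != 0 by rewrite gt_eqF.
have hUw : U *m Ud *m w = w.
  apply: (@scalerI _ _ rho rnz).
  by rewrite scalemxAr -[in LHS]hw !mulmxA hUUV hw.
have hAw : A *m Ud *m w = (1 - rho) *: w.
  by rewrite eA mulmxBl mulmxBl hUw hw scalerBl scale1r.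
have hAd := AdAUd ps hU hA.
have key : Ud *m w = (1 - rho) *: (Ad *m w).
  by rewrite -{1}hAd -!mulmxA (mulmxA A) hAw -scalemxAr.
have r1 : rho < 1.
  have nz : Ud *m w != 0.
    apply/eqP => h0; move: hw; rewrite -mulmxA h0 mulmx0 => /esym/eqP.
    by rewrite scaler_eq0 (negbTE rnz) (negbTE wnz).
  have [i [j hij]] := nonzero_entry nz.
  have pos : 0 < (Ud *m w) i j by rewrite lt_def hij nonneg_mul.
  move: pos; rewrite key mxE => pos.
  have h0 := nonneg_mul nAd nw i j.
  rewrite -subr_gt0; apply: contraTT pos; rewrite -!leNgt => h.
  exact: mulr_le0_ge0.
split => //.
have r1nz : 1 - rho != 0 by rewrite subr_eq0 eq_sym lt_eqF.
have e : (1 - rho) *: ((V *m Ad) *m w) = rho *: w.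
  by rewrite -mulmxA scalemxAr -key mulmxA hw.
apply: (@scalerI _ _ (1 - rho) r1nz).
by rewrite e scalerA mulrC divfK.
Qed.

Lemma pos_entry_sum k (f : 'I_k -> R) l :
  (forall i, 0 <= f i) -> 0 < f l -> 0 < \sum_i f i.
Proof.
move=> h hl; rewrite (bigD1 l) //=; apply: (lt_le_trans hl).
by rewrite lerDl sumr_ge0.
Qed.

Lemma pos_form m n (D : 'M[R]_(n, m)) (u : 'M[R]_(1, n)) (w : 'M[R]_(m, 1)) :
  mx_nonneg u -> u != 0 -> mx_nonneg w -> w != 0 -> (forall i j, 0 < D i j) ->
  0 < (u *m D *m w) 0 0.
Proof.
move=> nu unz nw wnz hD.
have [i0 [l0 hl]] := nonzero_entry unz.
have [k0 [j0 hk]] := nonzero_entry wnz.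
move: hl hk; rewrite (ord1 i0) (ord1 j0) => hl hk.
rewrite mxE; apply: (pos_entry_sum (l := k0)).
  move=> i; apply: mulr_ge0 => //; rewrite mxE; apply: sumr_ge0 => l _.
  by apply: mulr_ge0 => //; apply: ltW.
apply: mulr_gt0; last by rewrite lt_def hk nw.
rewrite mxE; apply: (pos_entry_sum (l := l0)).
  by move=> l; apply: mulr_ge0 => //; apply: ltW.
by apply: mulr_gt0 => //; rewrite lt_def hl nu.
Qed.

Lemma core m n (A1d A2d : 'M[R]_(n, m)) (u : 'M[R]_(1, n)) (w : 'M[R]_(m, 1)) mu1 mu2 :
  mx_nonneg u -> u != 0 -> mx_nonneg w -> w != 0 ->
  mx_gt A2d A1d -> mx_nonneg A1d -> 0 < mu1 ->
  mu1 *: (u *m A2d *m w) = mu2 *: (u *m A1d *m w) -> mu1 < mu2.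
Proof.
move=> nu unz nw wnz hgt nA1 m1 e.
have s1 : 0 <= (u *m A1d *m w) 0 0 by apply: nonneg_mul => //; apply: nonneg_mul.
have d : 0 < (u *m (A2d - A1d) *m w) 0 0.
  by apply: pos_form => // i j; rewrite !mxE subr_gt0.
rewrite mulmxBr mulmxBl mxE [X in _ + X]mxE subr_gt0 in d.
have := congr1 (fun M : 'M[R]_(1,1) => M 0 0) e; rewrite /= 2![((_ *: _ : 'M[R]_(1,1)) _ _)]mxE => {}e.
set a := (u *m A1d *m w) 0 0 in s1 d e.
set b := (u *m A2d *m w) 0 0 in d e.
rewrite ltNge; apply/negP => h.
have : mu2 * a <= mu1 * a by rewrite ler_wpM2r.
rewrite -e leNgt => /negP; apply.
by rewrite ltr_pM2l.
Qed.

Lemma mono_rho (r1 r2 : R) :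
  0 < r1 -> r1 < 1 -> 0 < r2 -> r2 < 1 -> r1 / (1 - r1) < r2 / (1 - r2) -> r1 < r2.
Proof.
move=> p1 l1 p2 l2; rewrite ltNge; apply: contraNT; rewrite -leNgt => h.
have q1 : 0 < 1 - r1 by rewrite subr_gt0.
have q2 : 0 < 1 - r2 by rewrite subr_gt0.
rewrite ler_pdivlMr // mulrAC ler_pdivrMr //.
by rewrite !mulrBr !mulr1 [r2 * r1]mulrC lerD2r.
Qed.

End Split2.

Lemma chain1 (R : rcfType) m n (u : 'M[R]_(1, n)) (A1d A2d : 'M[R]_(n, m)) (V : 'M[R]_(m, n))
  (w : 'M[R]_(m, 1)) mu1 mu2 :
  u *m (A1d *m V) = mu1 *: u -> (V *m A2d) *m w = mu2 *: w ->
  mu1 *: (u *m A2d *m w) = mu2 *: (u *m A1d *m w).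
Proof.
move=> e1 e2; rewrite [RHS]scalemxAr -e2 !scalemxAl -e1.
by rewrite !mulmxA.
Qed.

Lemma chain2 (R : rcfType) m n (u : 'M[R]_(1, n)) (A1d A2d : 'M[R]_(n, m)) (V : 'M[R]_(m, n))
  (w : 'M[R]_(m, 1)) mu1 mu2 :
  (V *m A1d) *m w = mu1 *: w -> u *m (A2d *m V) = mu2 *: u ->
  mu1 *: (u *m A2d *m w) = mu2 *: (u *m A1d *m w).
Proof.
move=> e1 e2; rewrite [LHS]scalemxAr -e1 !scalemxAl -e2.
by rewrite !mulmxA.
Qed.
Lemma PF_left (R : rcfType) n (B : 'M[R]_n) : mx_nonneg B -> 0 < spectral_radius B ->
  exists u : 'M[R]_(1, n), [/\ mx_nonneg u, u != 0 & u *m B = spectral_radius B *: u].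
Proof.
move=> nB pB.
have nBt : mx_nonneg B^T by move=> i j; rewrite mxE.
have pBt : 0 < spectral_radius B^T by rewrite rho_tr.
have [w [nw wnz hw]] := PF nBt pBt.
exists w^T; split.
- by move=> i j; rewrite mxE.
- by rewrite trmx_eq0.
- have := congr1 trmx hw; rewrite trmx_mul trmxK rho_tr => ->.
  by rewrite linearZ.
Qed.

Theorem theorem3p11 (R : rcfType) (m n : nat)
    (A1 A2 U1 U2 V : 'M[R]_(m, n))
    (A1d A2d U1d U2d : 'M[R]_(n, m)) :
  is_MP_inverse A1 A1d -> is_MP_inverse A2 A2d ->
  (pwr_splitting_I A1 U1 V U1d /\ pwr_splitting_II A2 U2 V U2d \/
   pwr_splitting_II A1 U1 V U1d /\ pwr_splitting_I A2 U2 V U2d) ->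
  0 < spectral_radius (U1d *m V) ->
  0 < spectral_radius (U2d *m V) ->
  V != 0 ->
  mx_gt A2d A1d -> mx_nonneg A1d ->
  spectral_radius (U1d *m V) < spectral_radius (U2d *m V) /\
  spectral_radius (U2d *m V) < 1.
Proof.
move=> hA1 hA2 hcase p1 p2 _ hgt nA1.
have nA2 : mx_nonneg A2d by move=> i j; apply: ltW; apply: le_lt_trans (nA1 i j) (hgt i j).
set r1 := spectral_radius (U1d *m V) in p1 *.
set r2 := spectral_radius (U2d *m V) in p2 *.
case: hcase => [[[ps1 mp1 nU1 nU1V] [ps2 mp2 nU2 nVU2]]|[[ps1 mp1 nU1 nVU1] [ps2 mp2 nU2 nU2V]]].
- have [u [nu unz hu]] := PF_left nU1V p1.
  have [l1 e1] := L1 ps1 mp1 hA1 nU1 nA1 nu unz p1 hu.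
  have p2' : 0 < spectral_radius (V *m U2d) by rewrite rho_AB; exact: p2.
  have [w [nw wnz hw]] := PF nVU2 p2'.
  rewrite rho_AB -/r2 in hw.
  clearbody r1 r2.
  have [l2 e2] := L2 ps2 mp2 hA2 nU2 nA2 nw wnz p2 hw.
  split; last exact: l2.
  apply: (mono_rho p1 l1 p2 l2).
  apply: (core nu unz nw wnz hgt nA1).
  + by apply: divr_gt0; [exact: p1 | rewrite subr_gt0; exact: l1].
  exact: (chain1 e1 e2).
- have p1' : 0 < spectral_radius (V *m U1d) by rewrite rho_AB; exact: p1.
  have [w [nw wnz hw]] := PF nVU1 p1'.
  rewrite rho_AB -/r1 in hw.
  have [l1 e1] := L2 ps1 mp1 hA1 nU1 nA1 nw wnz p1 hw.
  have [u [nu unz hu]] := PF_left nU2V p2.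
  have [l2 e2] := L1 ps2 mp2 hA2 nU2 nA2 nu unz p2 hu.
  clearbody r1 r2.
  split; last exact: l2.
  apply: (mono_rho p1 l1 p2 l2).
  apply: (core nu unz nw wnz hgt nA1).
  + by apply: divr_gt0; [exact: p1 | rewrite subr_gt0; exact: l1].
  exact: (chain2 e1 e2).
Qed.
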